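(* For $n\ge1$ let \[ \mathbf{M}_n=\begin{bmatrix} \frac{n}{2(2n+1)} & \frac{-3}{2n(2n+1)} & \frac{3}{2n^{3}}\\ 0 & \frac{n}{2(2n+1)} & \frac{3}{2n}\\ 0 & 0 & 1 \end{bmatrix}. \] Then the limit $\lim_{N\to\infty}\mathbf{M}_1\mathbf{M}_2\cdots\mathbf{M}_N$ exists and equals \[ \begin{bmatrix}0 & 0 & \zeta(4)\\ 0 & 0 & \zeta(2)\\ 0&0&1\end{bmatrix}. \]
   Context: $\zeta$ denotes the Riemann zeta function. *)

(* Defs.v *)
From HB Require Import structures.
From mathcomp Require Import all_boot all_order all_algebra.
From mathcomp Require Import all_classical all_reals all_analysis.
Set Implicit Arguments. Unset Strict Implicit. Unset Printing Implicit Defensive.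
Import Order.TTheory GRing.Theory Num.Theory.
Import numFieldNormedType.Exports.
Local Open Scope ring_scope.

Definition riemann_zeta {R : realType} (s : R) : R :=
  limn (fun N : nat => \sum_(1 <= k < N) ((k%:R : R) `^ (- s))).

Definition Mmat {R : realType} (n : nat) : 'M[R]_3 :=
  let n' : R := n%:R in
  \matrix_(i < 3, j < 3)
    match nat_of_ord i, nat_of_ord j with
    | 0, 0 => n' / (2 * (2 * n' + 1))
    | 0, 1 => - 3 / (2 * n' * (2 * n' + 1))
    | 0, 2 => 3 / (2 * n' ^+ 3)
    | 1, 1 => n' / (2 * (2 * n' + 1))
    | 1, 2 => 3 / (2 * n')
    | 2, 2 => 1
    | _, _ => 0
    end.

Definition Mlim {R : realType} : 'M[R]_3 :=
  \matrix_(i < 3, j < 3)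
    match nat_of_ord i, nat_of_ord j with
    | 0, 2 => riemann_zeta 4
    | 1, 2 => riemann_zeta 2
    | 2, 2 => 1
    | _, _ => 0
    end.

(* Main.v *)
Require Import Defs.
From HB Require Import structures.
From mathcomp Require Import all_boot all_order all_algebra.
From mathcomp Require Import all_classical all_reals all_analysis.
From mathcomp Require Import ring lra.
Import Order.TTheory GRing.Theory Num.Theory.
Import numFieldNormedType.Exports.
Local Open Scope ring_scope.
Local Open Scope classical_set_scope.

Section S.
Variable R : realType.
Implicit Types (m k : nat).

Definition aa (n : nat) : R := n%:R / (2 * (2 * n%:R + 1)).
Definition bb (n : nat) : R := - 3 / (2 * n%:R * (2 * n%:R + 1)).
Definition cc (n : nat) : R := 3 / (2 * n%:R ^+ 3).
Definition dd (n : nat) : R := 3 / (2 * n%:R).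

Fixpoint beta m k : R := if m is m'.+1 then
  beta m' k * ((2 * m%:R + 1) * m%:R ^+ 2 / ((2 * m%:R - 1) * (k%:R + m%:R) ^+ 2))
  else (k%:R ^+ 2)^-1.
Fixpoint W m k : R := if m is m'.+1 then
  W m' k + ((k%:R + m%:R) ^+ 2)^-1 - (m%:R ^+ 2)^-1 else (k%:R ^+ 2)^-1.
Definition G m k : R := beta m k * (k%:R + (3 * m%:R + 1) / 2) / (2 * m%:R + 1).
Definition H m k : R := G m k * W m k.
Definition alpha m k : R := beta m k * W m k.

Lemma beta_shift m k : (0 < k)%N ->
  beta m k.+1 = beta m k * (k%:R ^+ 2 / (k%:R + m%:R + 1) ^+ 2).
Proof.
move=> k0; have kp : (0 : R) < k%:R by rewrite ltr0n.
elim: m => [|m IH] /=.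
  rewrite -natr1; field.
  by apply/andP; split; apply/eqP; lra.
rewrite IH -!natr1.
have mp : (0 : R) <= m%:R by exact: ler0n.
field.
by rewrite !(negbT (eqP _)) //; apply/eqP; lra.
Qed.
Lemma W_shift m k : (0 < k)%N ->
  W m k.+1 = W m k - (k%:R ^+ 2)^-1 + ((k%:R + m%:R + 1) ^+ 2)^-1.
Proof.
move=> k0; have kp : (0 : R) < k%:R by rewrite ltr0n.
elim: m => [|m IH] /=.
  rewrite -natr1; field.
  by apply/andP; split; apply/eqP; lra.
rewrite IH -!natr1.
have mp : (0 : R) <= m%:R by exact: ler0n.
field.
by rewrite !(negbT (eqP _)) //; apply/eqP; lra.
Qed.

Lemma I1 m k : (0 < k)%N ->
  beta m k - aa m.+1 * beta m.+1 k = G m k - G m k.+1.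
Proof.
move=> k0; have kp : (0 : R) < k%:R by rewrite ltr0n.
have mp : (0 : R) <= m%:R by exact: ler0n.
rewrite /G beta_shift //= /aa -!natr1.
field.
by rewrite !(negbT (eqP _)) //; apply/eqP; lra.
Qed.

Lemma I2 m k : (0 < k)%N ->
  alpha m k - aa m.+1 * alpha m.+1 k - bb m.+1 * beta m.+1 k = H m k - H m k.+1.
Proof.
move=> k0; have kp : (0 : R) < k%:R by rewrite ltr0n.
have mp : (0 : R) <= m%:R by exact: ler0n.
rewrite /H /alpha /G beta_shift // W_shift //= /aa /bb -!natr1.
field.
by rewrite !(negbT (eqP _)) //; apply/eqP; lra.
Qed.
Definition BB m K : R := \sum_(1 <= k < K.+1) beta m k.
Definition AA m K : R := \sum_(1 <= k < K.+1) alpha m k.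

Lemma BB_step m K :
  BB m K = aa m.+1 * BB m.+1 K + G m 1 - G m K.+1.
Proof.
have T : \sum_(1 <= k < K.+1) (beta m k - aa m.+1 * beta m.+1 k) = G m 1 - G m K.+1.
  rewrite (@telescope_sumr_eq _ 1 K.+1 (fun k => - G m k)) ?opprK 1?addrC //.
  by move=> k /andP[k1 _]; rewrite I1 //; ring.
rewrite /BB mulr_sumr -addrA -T -big_split /=; apply: eq_bigr => k _; ring.
Qed.

Lemma AA_step m K :
  AA m K = aa m.+1 * AA m.+1 K + bb m.+1 * BB m.+1 K + H m 1 - H m K.+1.
Proof.
have T : \sum_(1 <= k < K.+1) (alpha m k - aa m.+1 * alpha m.+1 k - bb m.+1 * beta m.+1 k)
   = H m 1 - H m K.+1.
  rewrite (@telescope_sumr_eq _ 1 K.+1 (fun k => - H m k)) ?opprK 1?addrC //.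
  by move=> k /andP[k1 _]; rewrite I2 //; ring.
rewrite /AA /BB !mulr_sumr -addrA -T -!big_split /=; apply: eq_bigr => k _; ring.
Qed.

Lemma beta1 m : beta m 1 = (2 * m%:R + 1) / (m%:R + 1) ^+ 2.
Proof.
have mp : (0 : R) <= m%:R by exact: ler0n.
elim: m mp => [|m IH] mp /=; first by field.
rewrite IH; last exact: ler0n.
have mp' : (0 : R) <= m%:R by exact: ler0n.
rewrite -!natr1; field.
by rewrite !(negbT (eqP _)) //; apply/eqP; lra.
Qed.

Lemma W1 m : W m 1 = ((m%:R + 1) ^+ 2)^-1.
Proof.
elim: m => [|m IH] /=; first by rewrite add0r.
have mp : (0 : R) <= m%:R by exact: ler0n.
rewrite IH -!natr1; field.
by rewrite !(negbT (eqP _)) //; apply/eqP; lra.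
Qed.

Lemma G1 m : G m 1 = dd m.+1.
Proof.
have mp : (0 : R) <= m%:R by exact: ler0n.
rewrite /G beta1 /dd -natr1; field.
by rewrite !(negbT (eqP _)) //; apply/eqP; lra.
Qed.

Lemma H1 m : H m 1 = cc m.+1.
Proof.
have mp : (0 : R) <= m%:R by exact: ler0n.
rewrite /H G1 W1 /dd /cc -natr1; field.
by rewrite !(negbT (eqP _)) //; apply/eqP; lra.
Qed.
Fixpoint D N : R := if N is N'.+1 then D N' * aa N else 1.
Fixpoint X N : R := if N is N'.+1 then D N' * bb N + X N' * aa N else 0.
Fixpoint Y N : R := if N is N'.+1 then D N' * cc N + X N' * dd N + Y N' else 0.
Fixpoint Z N : R := if N is N'.+1 then D N' * dd N + Z N' else 0.

Lemma inv2 N K : BB 0 K = D N * BB N K + Z N - \sum_(m < N) D m * G m K.+1.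
Proof.
elim: N => [|N IH]; first by rewrite big_ord0 /= mul1r !subr0 addr0.
rewrite IH big_ord_recr /= (BB_step N K) G1; ring.
Qed.

Lemma inv4 N K : AA 0 K = D N * AA N K + X N * BB N K + Y N
   - \sum_(m < N) (D m * H m K.+1 + X m * G m K.+1).
Proof.
elim: N => [|N IH]; first by rewrite big_ord0 /= mul1r mul0r !subr0 !addr0.
rewrite IH big_ord_recr /= (BB_step N K) (AA_step N K) G1 H1; ring.
Qed.
Lemma natp (n : nat) : (0 : R) <= n%:R. Proof. exact: ler0n. Qed.

Lemma key_ineq (x : R) : 0 <= x ->
  2 / (x + 1 + 1) <= 2 / (x + 1) - ((x + 1) ^+ 2)^-1.
Proof.
move=> x0.
have -> : 2 / (x + 1) - ((x + 1) ^+ 2)^-1 = 2 / (x + 1 + 1) + x / ((x + 1) ^+ 2 * (x + 1 + 1)).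
  field; by rewrite !(negbT (eqP _)) //; apply/eqP; lra.
rewrite lerDl divr_ge0 // mulr_ge0 //; first by rewrite exprn_ge0 //; lra.
lra.
Qed.

Lemma beta_bound m k : (0 < k)%N -> 0 <= beta m k <= (k%:R ^+ 2)^-1.
Proof.
move=> k0; have kp : (1 : R) <= k%:R by rewrite ler1n.
elim: m => [|m IH] /=.
  by rewrite lexx andbT invr_ge0 exprn_ge0 // ler0n.
case/andP: IH => IH1 IH2.
have mp := natp m.
set r := (_ / _).
have r0 : 0 <= r.
  rewrite /r divr_ge0 // ?mulr_ge0 ?exprn_ge0 //; rewrite -?natr1; lra.
have r1 : r <= 1.
  rewrite /r ler_pdivrMr; last first.
    rewrite mulr_gt0 // ?exprn_gt0 //; rewrite -?natr1; lra.
  rewrite mul1r -!natr1; nra.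
apply/andP; split; first exact: mulr_ge0.
by rewrite -[X in _ <= X]mulr1; apply: ler_pM.
Qed.

Lemma W_le m k : (0 < k)%N -> W m k <= 1.
Proof.
move=> k0; have kp : (1 : R) <= k%:R by rewrite ler1n.
elim: m => [|m IH] /=.
  rewrite invf_le1 ?exprn_gt0 //; first by rewrite exprn_ege1.
  lra.
have mp := natp m.
suff : ((k%:R + m.+1%:R) ^+ 2)^-1 <= (m.+1%:R ^+ 2)^-1 :> R.
  by move: IH; generalize (W m k) (((k%:R + m.+1%:R) ^+ 2)^-1 : R) ((m.+1%:R ^+ 2)^-1 : R) => w a b; lra.
rewrite lef_pV2 ?posrE ?exprn_gt0 // -?natr1; try lra.
nra.
Qed.

Lemma W_ge m k : (0 < k)%N -> 2 / (m%:R + 1) - 2 <= W m k.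
Proof.
move=> k0; have kp : (1 : R) <= k%:R by rewrite ler1n.
elim: m => [|m IH] /=.
  rewrite add0r divr1 subrr invr_ge0 exprn_ge0 //; lra.
have mp := natp m.
have h1 : 0 <= ((k%:R + m.+1%:R) ^+ 2)^-1 :> R by rewrite invr_ge0 exprn_ge0 // ler0n.
have key := key_ineq _ mp; rewrite -[m.+1%:R]natr1.
apply: le_trans (_ : (2 / (m%:R + 1) - 2) - ((m%:R + 1) ^+ 2)^-1 <= _).
  move: key; set p := 2 / (m%:R + 1 + 1); set q := 2 / (m%:R + 1); set r := (m%:R + 1) ^- 2; lra.
move: IH h1; rewrite -[m.+1%:R]natr1; set q := 2 / (m%:R + 1); set r := (m%:R + 1) ^- 2.
set h := (k%:R + (m%:R + 1)) ^- 2; lra.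
Qed.

Lemma W_abs m k : (0 < k)%N -> `|W m k| <= 2.
Proof.
move=> k0; have h1 := W_le m k k0; have h2 := W_ge m k k0.
have mp := natp m.
have : 0 <= 2 / (m%:R + 1) :> R by apply: divr_ge0; lra.
move: h1 h2; set q := 2 / (m%:R + 1); rewrite ler_norml; lra.
Qed.
Lemma alpha_abs m k : (0 < k)%N -> `|alpha m k| <= 2 * beta m k.
Proof.
move=> k0; have /andP[b0 _] := beta_bound m k k0.
rewrite /alpha normrM (ger0_norm b0) mulrC; apply: ler_pM => //.
exact: W_abs.
Qed.

Lemma beta_k2 m k : (0 < k)%N -> beta m k * k%:R ^+ 2 <= 1.
Proof.
move=> k0; have /andP[b0 b1] := beta_bound m k k0.
have kp : (0 : R) < k%:R ^+ 2 by rewrite exprn_gt0 // ltr0n.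
by rewrite -ler_pdivlMr // mul1r.
Qed.

Lemma G_bound m k : (0 < k)%N -> 0 <= G m k <= (2 * m%:R + 2) / k%:R.
Proof.
move=> k0; have /andP[b0 _] := beta_bound m k k0; have bk := beta_k2 m k k0.
have kp : (1 : R) <= k%:R by rewrite ler1n.
have mp := natp m.
rewrite /G; move: b0 bk; set b := beta m k; set x : R := k%:R; set y : R := m%:R => b0 bk.
apply/andP; split.
  apply: divr_ge0; last lra.
  apply: mulr_ge0 => //; apply: addr_ge0; first lra.
  apply: divr_ge0; lra.
rewrite -subr_ge0.
have -> : (2 * y + 2) / x - b * (x + (3 * y + 1) / 2) / (2 * y + 1)
   = ((2 * y + 2) * (2 * y + 1) * 2 - b * x * (2 * x + 3 * y + 1)) / (2 * x * (2 * y + 1)).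
  field; by rewrite !(negbT (eqP _)) //; apply/eqP; lra.
apply: divr_ge0; last nra.
have e1 : 2 * x + 3 * y + 1 <= x * (4 * y + 4) by nra.
have bx : 0 <= b * x by apply: mulr_ge0 => //; lra.
have h1 : b * x * (2 * x + 3 * y + 1) <= b * x * (x * (4 * y + 4)) by apply: ler_wpM2l.
nra.
Qed.

Lemma H_abs m k : (0 < k)%N -> `|H m k| <= 2 * G m k.
Proof.
move=> k0; have /andP[g0 _] := G_bound m k k0.
rewrite /H normrM (ger0_norm g0) mulrC; apply: ler_pM => //.
exact: W_abs.
Qed.

Lemma sum_inv_sq K : \sum_(1 <= k < K.+1) (k%:R ^+ 2)^-1 <= 2 - 2 / (K%:R + 1) :> R.
Proof.
elim: K => [|K IH]; first by rewrite big_geq // add0r divr1 subrr.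
rewrite big_nat_recr //=.
have := key_ineq _ (natp K); move: IH; rewrite -[K.+1%:R]natr1.
set p := 2 / _; set q := 2 / _; set r := ((K%:R + 1) ^+ 2)^-1; lra.
Qed.
Lemma D_bound N : 0 <= D N /\ D N * ((N%:R + 1) * (N%:R + 2)) <= 2.
Proof.
elim: N => [|N [d0 d1]] /=; first by split; lra.
have np := natp N.
rewrite /aa -[N.+1%:R]natr1; split.
  apply: mulr_ge0 => //; apply: divr_ge0; lra.
have -> : D N * ((N%:R + 1) / (2 * (2 * (N%:R + 1) + 1))) * ((N%:R + 1 + 1) * (N%:R + 1 + 2))
   = D N * ((N%:R + 1) * (N%:R + 2)) * ((N%:R + 3) / (4 * N%:R + 6)).
  field; by rewrite !(negbT (eqP _)) //; apply/eqP; lra.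
rewrite -[2 in X in _ <= X]mulr1; apply: ler_pM => //.
  apply: mulr_ge0 => //; apply: mulr_ge0; lra.
rewrite ler_pdivrMr; lra.
Qed.
Lemma X_bound N : 0 <= - X N <= 3 * N%:R * D N.
Proof.
elim: N => [|N /andP[u0 u1]] /=; first by rewrite oppr0 lexx /= mulr0 mul0r.
have [d0 _] := D_bound N.
have np := natp N.
rewrite /aa /bb -[N.+1%:R]natr1.
move: u0 u1 d0 np; set u := - X N; set d := D N; set n := N%:R => u0 u1 d0 np.
have -> : - (d * (- 3 / (2 * (n + 1) * (2 * (n + 1) + 1))) + X N * ((n + 1) / (2 * (2 * (n + 1) + 1))))
   = (3 * d + u * (n + 1) ^+ 2) / (2 * (n + 1) * (2 * n + 3)).
  rewrite /u; field; by rewrite !(negbT (eqP _)) //; apply/eqP; lra.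
apply/andP; split.
  apply: divr_ge0; last nra.
  apply: addr_ge0; [lra | apply: mulr_ge0 => //; apply: exprn_ge0; lra].
rewrite -subr_ge0.
have -> : 3 * (n + 1) * (d * ((n + 1) / (2 * (2 * (n + 1) + 1)))) -
    (3 * d + u * (n + 1) ^+ 2) / (2 * (n + 1) * (2 * n + 3))
   = (3 * d * ((n + 1) ^+ 3 - 1) - u * (n + 1) ^+ 2) / (2 * (n + 1) * (2 * n + 3)).
  field; by rewrite !(negbT (eqP _)) //; apply/eqP; lra.
apply: divr_ge0; last nra.
have h1 : u * (n + 1) ^+ 2 <= 3 * n * d * (n + 1) ^+ 2.
  by apply: ler_wpM2r => //; apply: exprn_ge0; lra.
have h2 : 0 <= d * (n ^+ 2 + 2 * n) by apply: mulr_ge0 => //; nra.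
nra.
Qed.
Lemma BB_bound N K : 0 <= BB N K <= 2.
Proof.
apply/andP; split.
  rewrite /BB big_nat; apply: sumr_ge0 => k /andP[k1 _].
  by case/andP: (beta_bound N k k1).
apply: le_trans (_ : \sum_(1 <= k < K.+1) (k%:R ^+ 2)^-1 <= _).
  apply: ler_sum_nat => k /andP[k1 _]; by case/andP: (beta_bound N k k1).
apply: le_trans (sum_inv_sq K) _.
have : 0 <= 2 / (K%:R + 1) :> R by apply: divr_ge0 => //; have := natp K; lra.
lra.
Qed.

Lemma AA_abs N K : `|AA N K| <= 4.
Proof.
apply: le_trans (ler_norm_sum _ _ _) _.
apply: le_trans (_ : \sum_(1 <= k < K.+1) (2 * beta N k) <= _).
  by apply: ler_sum_nat => k /andP[k1 _]; exact: alpha_abs.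
rewrite -mulr_sumr; have /andP[_ h] := BB_bound N K; rewrite /BB in h; lra.
Qed.

Lemma D_le1 m : 0 <= D m <= 1.
Proof.
have [d0 d1] := D_bound m; have mp := natp m.
apply/andP; split => //; move: d0 d1; set d := D m => d0 d1; nra.
Qed.

Lemma X_le3 m : `|X m| <= 3.
Proof.
have [d0 d1] := D_bound m; have mp := natp m.
have /andP[u0 u1] := X_bound m.
rewrite -normrN ger0_norm //.
move: d0 d1 u0 u1; set d := D m; set u := - X m => d0 d1 u0 u1.
have : m%:R * d <= 1 by nra.
nra.
Qed.

Lemma D_decay N : D N <= 2 / (N%:R + 1).
Proof.
have [d0 d1] := D_bound N; have np := natp N.
rewrite ler_pdivlMr; last lra.
move: d0 d1; set d := D N => d0 d1; nra.
Qed.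

Lemma X_decay N : `|X N| <= 6 / (N%:R + 1).
Proof.
have [d0 d1] := D_bound N; have np := natp N.
have /andP[u0 u1] := X_bound N.
rewrite -normrN ger0_norm // ler_pdivlMr; last lra.
move: d0 d1 u0 u1; set d := D N; set u := - X N => d0 d1 u0 u1.
have : N%:R * d * (N%:R + 1) <= 2 by nra.
nra.
Qed.
Lemma G_small m N K : (m < N)%N -> 0 <= G m K.+1 <= 2 * N%:R / (K%:R + 1).
Proof.
move=> mN; have /andP[g0 g1] := G_bound m K.+1 (ltn0Sn K).
rewrite g0 /=; apply: le_trans g1 _; rewrite -[K.+1%:R]natr1.
apply: ler_wpM2r; first by rewrite invr_ge0; have := natp K; lra.
have : (m.+1%:R : R) <= N%:R by rewrite ler_nat.
rewrite -[m.+1%:R]natr1; lra.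
Qed.

Lemma sum_bound (f : nat -> R) (c : R) N : (forall m, (m < N)%N -> `|f m| <= c) ->
  `|\sum_(m < N) f m| <= N%:R * c.
Proof.
move=> h; apply: le_trans (ler_norm_sum _ _ _) _.
apply: le_trans (_ : \sum_(m < N) c <= _).
  by apply: ler_sum => m _; apply: h.
by rewrite sumr_const card_ord mulr_natl.
Qed.

Lemma Z_est N K : `|BB 0 K - Z N| <= 4 / (N%:R + 1) + N%:R * (2 * N%:R / (K%:R + 1)).
Proof.
have e : BB 0 K - Z N = D N * BB N K - \sum_(m < N) D m * G m K.+1.
  by rewrite (inv2 N K); ring.
rewrite e; apply: le_trans (ler_normB _ _) _; apply: lerD.
  have /andP[b0 b1] := BB_bound N K; have /andP[d0 _] := D_le1 N.
  rewrite normrM !ger0_norm //.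
  apply: le_trans (_ : 2 / (N%:R + 1) * 2 <= _); last by rewrite mulrAC -mulrA; lra.
  by apply: ler_pM => //; exact: D_decay.
apply: (sum_bound (fun m => D m * G m K.+1)) => m mN.
have /andP[d0 d1] := D_le1 m; have /andP[g0 g1] := G_small m N K mN.
rewrite normrM !ger0_norm //.
by rewrite -[X in _ <= X]mul1r; apply: ler_pM.
Qed.

Lemma Y_est N K : `|AA 0 K - Y N| <= 20 / (N%:R + 1) + N%:R * (5 * (2 * N%:R / (K%:R + 1))).
Proof.
have e : AA 0 K - Y N = (D N * AA N K + X N * BB N K)
   - \sum_(m < N) (D m * H m K.+1 + X m * G m K.+1).
  by rewrite (inv4 N K); ring.
rewrite e; apply: le_trans (ler_normB _ _) _; apply: lerD.
  apply: le_trans (ler_normD _ _) _.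
  have /andP[b0 b1] := BB_bound N K; have /andP[d0 _] := D_le1 N.
  rewrite !normrM (ger0_norm d0) (ger0_norm b0).
  have h1 : D N * `|AA N K| <= 2 / (N%:R + 1) * 4.
    by apply: ler_pM => //; [exact: D_decay | exact: AA_abs].
  have h2 : `|X N| * BB N K <= 6 / (N%:R + 1) * 2.
    by apply: ler_pM => //; exact: X_decay.
  move: h1 h2; set t := (N%:R + 1)^-1; lra.
apply: (sum_bound (fun m => D m * H m K.+1 + X m * G m K.+1)) => m mN.
have /andP[d0 d1] := D_le1 m; have /andP[g0 g1] := G_small m N K mN. rewrite /=.
apply: le_trans (ler_normD _ _) _; rewrite [`|D m * _|]normrM [`|X m * _|]normrM.
have h1 : `|D m| * `|H m K.+1| <= 1 * (2 * G m K.+1).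
  by apply: ler_pM => //; [rewrite ger0_norm | exact: H_abs].
have h2 : `|X m| * `|G m K.+1| <= 3 * G m K.+1.
  rewrite [`|G m K.+1|]ger0_norm //.
  by apply: ler_wpM2r => //; exact: X_le3.
move: h1 h2 g1; set g := G m K.+1; set c := (2 * N%:R / (K%:R + 1)).
set u := `|D m| * _; set v := `|X m| * _; lra.
Qed.
Lemma lim_bound (s : nat -> R) (L e c : R) : cvgn s ->
  (forall K, `|s K.+1 - L| <= e + c / (K%:R + 1)) -> `|limn s - L| <= e.
Proof.
move=> cs h; apply/ler_addgt0Pr => d d0.
have hc : (fun K => `|s K.+1 - L|) @ \oo --> `|limn s - L|.
  apply: cvg_norm; apply: cvgB; last exact: cvg_cst.
  by rewrite (cvg_shiftS s).
apply: (cvgr_to_le hc); near=> K.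
apply: le_trans (h K) _; rewrite lerD2l.
have kp := natp K.
rewrite ler_pdivrMr; last lra.
have : c / d <= K%:R by near: K; exact: nbhs_infty_ger.
rewrite ler_pdivrMr //; nra.
Unshelve. all: by end_near.
Qed.
Definition s2 K : R := \sum_(1 <= k < K) (k%:R ^+ 2)^-1.
Definition s4 K : R := \sum_(1 <= k < K) (k%:R ^+ 4)^-1.

Lemma zeta2E : riemann_zeta (2 : R) = limn s2.
Proof.
rewrite /riemann_zeta (_ : (fun N : nat => _) = s2) //; apply/funext => K.
by apply: eq_bigr => k _; rewrite powR_invn // ler0n.
Qed.

Lemma zeta4E : riemann_zeta (4 : R) = limn s4.
Proof.
rewrite /riemann_zeta (_ : (fun N : nat => _) = s4) //; apply/funext => K.
by apply: eq_bigr => k _; rewrite powR_invn // ler0n.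
Qed.

Lemma s2E K : s2 K.+1 = BB 0 K. Proof. by []. Qed.

Lemma s4E K : s4 K.+1 = AA 0 K.
Proof.
rewrite /s4 /AA; apply: eq_bigr => k _ /=.
by rewrite /alpha /= -invfM -exprD.
Qed.

Lemma s_cvg (p : nat) : cvgn (fun K => \sum_(1 <= k < K) ((k%:R : R) ^+ p.+2)^-1).
Proof.
apply: nondecreasing_is_cvgn.
  apply/nondecreasing_seqP => n; case: n => [|n]; first by rewrite !big_geq.
  rewrite (big_nat_recr n.+1) //= lerDl invr_ge0 exprn_ge0 // ler0n.
exists 2 => _ [K _ <-].
case: K => [|K]; first by rewrite big_geq.
apply: le_trans (_ : \sum_(1 <= k < K.+1) (k%:R ^+ 2)^-1 <= _).
  apply: ler_sum_nat => k /andP[k1 _].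
  have kp : (1 : R) <= k%:R by rewrite ler1n.
  rewrite lef_pV2 ?posrE ?exprn_gt0 //; try lra.
  by apply: ler_weXn2l.
apply: le_trans (sum_inv_sq K) _.
have : 0 <= 2 / (K%:R + 1) :> R by apply: divr_ge0 => //; have := natp K; lra.
lra.
Qed.
Lemma Z_lim N : `|riemann_zeta (2 : R) - Z N| <= 4 / (N%:R + 1).
Proof.
rewrite zeta2E; apply: (@lim_bound _ _ _ (N%:R * (2 * N%:R))); first exact: (s_cvg 0).
by move=> K; rewrite s2E -mulrA; exact: Z_est.
Qed.

Lemma Y_lim N : `|riemann_zeta (4 : R) - Y N| <= 20 / (N%:R + 1).
Proof.
rewrite zeta4E; apply: (@lim_bound _ _ _ (N%:R * (5 * (2 * N%:R)))); first exact: (s_cvg 2).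
move=> K; rewrite s4E (_ : N%:R * (5 * (2 * N%:R)) / (K%:R + 1) = N%:R * (5 * (2 * N%:R / (K%:R + 1)))); [exact: Y_est | by rewrite !mulrA].
Qed.

Definition Pm N : 'M[R]_3 := \matrix_(i < 3, j < 3)
    match nat_of_ord i, nat_of_ord j with
    | 0, 0 => D N | 0, 1 => X N | 0, 2 => Y N
    | 1, 1 => D N | 1, 2 => Z N | 2, 2 => 1
    | _, _ => 0
    end.

Lemma prodE N : \prod_(1 <= n < N.+1) (Mmat n : 'M[R]_3) = Pm N.
Proof.
elim: N => [|N IH].
  rewrite big_geq //; apply/matrixP => i j; rewrite !mxE.
  by case: i => [[|[|[|i]]] Hi]; case: j => [[|[|[|j]]] Hj].
rewrite big_nat_recr //= IH; apply/matrixP => i j.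
rewrite -mulmxE !mxE !big_ord_recl big_ord0 !mxE /=.
case: i => [[|[|[|i]]] Hi]; case: j => [[|[|[|j]]] Hj] //=.
all: rewrite /aa /bb /cc /dd; ring.
Qed.
End S.
Theorem mainTheorem3 (R : realType) :
  (fun N : nat => \prod_(1 <= n < N.+1) (Mmat n : 'M[R]_3)) @ \oo --> (Mlim : 'M[R]_3).
Proof.
apply/cvg_ballP => e e0.
near=> N.
have np := natp R N.
have hN : 20 / (N%:R + 1) < e.
  rewrite ltr_pdivrMr; last lra.
  have : 20 / e < N%:R by near: N; exact: nbhs_infty_gtr.
  rewrite ltr_pdivrMr //; nra.
have t0 : 0 < 20 / (N%:R + 1) :> R by apply: divr_gt0; lra.
have hb : forall x y : R, `|x - y| <= 20 / (N%:R + 1) -> ball x e y.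
  move=> x y h; rewrite -ball_normE /=; exact: le_lt_trans h hN.
have hD := D_decay R N; have hX := X_decay R N.
have hY := Y_lim R N; have hZ := Z_lim R N.
have /andP[d0 _] := D_le1 R N.
have e1 : 2 / (N%:R + 1) <= 20 / (N%:R + 1) :> R.
  by apply: ler_wpM2r; [rewrite invr_ge0; lra | lra].
have e2 : 6 / (N%:R + 1) <= 20 / (N%:R + 1) :> R.
  by apply: ler_wpM2r; [rewrite invr_ge0; lra | lra].
have e3 : 4 / (N%:R + 1) <= 20 / (N%:R + 1) :> R.
  by apply: ler_wpM2r; [rewrite invr_ge0; lra | lra].
rewrite prodE.
split => // i j.
rewrite !mxE.
case: i => [[|[|[|i]]] Hi] //=; case: j => [[|[|[|j]]] Hj] //=; apply: hb;
  rewrite ?subrr ?normr0 ?sub0r ?normrN; try lra.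
all: by rewrite ger0_norm //; apply: le_trans hD e1.
Unshelve. all: by end_near.
Qed.
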